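(* Every sequence $a_1,a_2,\dotsc$ in a semigroup has a sumsequence $b_1,b_2,\dotsc$ of one of the following two types: (1) $b_n+b_m=b_n$ for all natural numbers $n<m$; or (2) for every natural number $n$, $\mathrm{FS}(b_1,\dotsc,b_n)\cap(\mathrm{FS}(b_1,\dotsc,b_n)+b_{n+1})=\emptyset$.
   Context: Semigroups are written additively and are not assumed commutative. For a sequence $a_1,a_2,\dotsc$ and a finite nonempty index set $F=\{i_1<\dotsb<i_m\}$, $a_F:=a_{i_1}+\dotsb+a_{i_m}$; $F_1<F_2$ means every element of $F_1$ is smaller than every element of $F_2$. A sumsequence of $a_1,a_2,\dotsc$ is a sequence $a_{F_1},a_{F_2},\dotsc$ for nonempty finite index sets $F_1<F_2<\dotsb$. $\mathrm{FS}(b_1,\dotsc,b_n):=\{b_{i_1}+\dotsb+b_{i_m}: m\ge1,\ i_1<\dotsb<i_m\le n\}$, and for a set $X$ and element $c$, $X+c:=\{x+c:x\in X\}$. *)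

(* Defs.v *)
(* Semigroups are given as a carrier type S with a binary
   operation op (written additively in the paper, not assumed commutative)
   and an associativity hypothesis. Sequences are indexed from 0. *)
From Stdlib Require Import List Arith Sorting.Sorted.
Import ListNotations.

(* a_F for a nonempty finite index set F, given as a strictly increasing list
   i1 < ... < im : a_{i1} + ... + a_{im} (left to right). *)
Definition idx_sum {T : Type} (op : T -> T -> T) (a : nat -> T) (i : nat)
  (l : list nat) : T :=
  fold_left (fun acc j => op acc (a j)) l (a i).

Definition incr_list (i : nat) (t : list nat) : Prop :=
  StronglySorted lt (i :: t).

Definition blocks_lt (F G : nat * list nat) : Prop :=
  forall x y, In x (fst F :: snd F) -> In y (fst G :: snd G) -> x < y.

(* b is a sumsequence of a: there are nonempty finite index sets
   F_0 < F_1 < ... (each F_k = fst (F k) :: snd (F k), strictly increasing)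
   with b k = a_{F_k}. *)
Definition sumsequence {T : Type} (op : T -> T -> T) (a b : nat -> T) : Prop :=
  exists F : nat -> nat * list nat,
    (forall k, incr_list (fst (F k)) (snd (F k))) /\
    (forall k, blocks_lt (F k) (F (S k))) /\
    (forall k, b k = idx_sum op a (fst (F k)) (snd (F k))).

Definition in_FS {T : Type} (op : T -> T -> T) (b : nat -> T) (n : nat) (x : T) : Prop :=
  exists (i : nat) (t : list nat),
    incr_list i t /\ (forall j, In j (i :: t) -> j < n) /\ x = idx_sum op b i t.

(* Main.v *)
Require Import Defs.
From Stdlib Require Import List Arith Lia Sorting.Sorted Classical ClassicalEpsilon FunctionalExtensionality.
Import ListNotations.

Definition sumL {T : Type} (op : T -> T -> T) (b : nat -> T) (l : list nat) : T :=
  match l with [] => b 0 | i :: t => idx_sum op b i t end.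

Lemma fold_assoc {T} (op : T -> T -> T)
  (assoc : forall x y z, op x (op y z) = op (op x y) z) (b : nat -> T) :
  forall u X z, fold_left (fun acc j => op acc (b j)) u (op X z) =
    op X (fold_left (fun acc j => op acc (b j)) u z).
Proof. induction u as [|j u IH]; intros X z; simpl; [reflexivity|].
  rewrite <- assoc. apply IH. Qed.

Lemma sumL_app {T} (op : T -> T -> T) (assoc : forall x y z, op x (op y z) = op (op x y) z)
  (b : nat -> T) l1 l2 : l1 <> [] -> l2 <> [] ->
  sumL op b (l1 ++ l2) = op (sumL op b l1) (sumL op b l2).
Proof.
  destruct l1 as [|i t]; [congruence|]. destruct l2 as [|j u]; [congruence|].
  intros _ _. simpl. unfold idx_sum. rewrite fold_left_app. simpl.
  apply (fold_assoc op assoc).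
Qed.

Lemma sumL_cons {T} (op : T -> T -> T) (assoc : forall x y z, op x (op y z) = op (op x y) z)
  (b : nat -> T) k L : L <> [] ->
  sumL op b (k :: L) = op (b k) (sumL op b L).
Proof. intros H. change (k :: L) with ([k] ++ L).
  rewrite (sumL_app op assoc); [reflexivity| discriminate | exact H]. Qed.

Lemma sumL_snoc {T} (op : T -> T -> T) (assoc : forall x y z, op x (op y z) = op (op x y) z)
  (b : nat -> T) l z : l <> [] ->
  sumL op b (l ++ [z]) = op (sumL op b l) (b z).
Proof. intros H. rewrite (sumL_app op assoc); [reflexivity| exact H | discriminate]. Qed.

Lemma concat_map_nonempty (D : nat -> list nat) L : L <> [] -> (forall k, In k L -> D k <> []) ->
  concat (map D L) <> [].
Proof. destruct L as [|k L]; [congruence|]. intros _ H. simpl. intro E.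
  apply app_eq_nil in E as [E _]. apply (H k); simpl; auto. Qed.

Lemma in_concat_map (D : nat -> list nat) L z : In z (concat (map D L)) ->
  exists k, In k L /\ In z (D k).
Proof. intros H. apply in_concat in H as [l [Hl Hz]]. apply in_map_iff in Hl as [k [<- Hk]].
  eauto. Qed.

Lemma sumL_concat {T} (op : T -> T -> T) (assoc : forall x y z, op x (op y z) = op (op x y) z)
  (a : nat -> T) (D : nat -> list nat) L :
  L <> [] -> (forall k, In k L -> D k <> []) ->
  sumL op a (concat (map D L)) = sumL op (fun k => sumL op a (D k)) L.
Proof.
  induction L as [|k L IH]; intros HL HD; [congruence|].
  destruct L as [|k' L'].
  - simpl. rewrite app_nil_r. reflexivity.
  - rewrite (sumL_cons op assoc); [|discriminate].
    change (concat (map D (k :: k' :: L'))) with (D k ++ concat (map D (k' :: L'))).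
    rewrite (sumL_app op assoc).
    + rewrite IH; [reflexivity|discriminate| intros; apply HD; simpl; auto].
    + apply HD; simpl; auto.
    + apply concat_map_nonempty; [discriminate|intros; apply HD; simpl; auto].
Qed.

Lemma SS_app l1 l2 : StronglySorted lt l1 -> StronglySorted lt l2 ->
  (forall x y, In x l1 -> In y l2 -> x < y) -> StronglySorted lt (l1 ++ l2).
Proof.
  induction l1 as [|a l1 IH]; intros H1 H2 H; simpl; auto.
  apply StronglySorted_inv in H1 as [H1 HF]. constructor.
  - apply IH; auto. intros; apply H; simpl; auto.
  - apply Forall_app. split; auto. apply Forall_forall. intros y Hy. apply H; simpl; auto.
Qed.

Lemma SS_app_inv l1 l2 : StronglySorted lt (l1 ++ l2) ->
  StronglySorted lt l1 /\ StronglySorted lt l2 /\ (forall x y, In x l1 -> In y l2 -> x < y).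
Proof.
  induction l1 as [|a l1 IH]; intros H; simpl in *.
  - split; [constructor|split; auto; tauto].
  - apply StronglySorted_inv in H as [H2 H3]. apply Forall_app in H3. destruct H3 as [F1 F2].
    destruct (IH H2) as [A [B C]]. split; [constructor; auto|split; auto].
    intros x y [<-|Hx] Hy; [|auto]. rewrite Forall_forall in F2. auto.
Qed.

Lemma SS_concat (D : nat -> list nat) L : StronglySorted lt L ->
  (forall k, In k L -> StronglySorted lt (D k)) ->
  (forall k k' y z, In k L -> In k' L -> k < k' -> In y (D k) -> In z (D k') -> y < z) ->
  StronglySorted lt (concat (map D L)).
Proof.
  induction L as [|k L IH]; intros HL HD HX; simpl; [constructor|].
  apply StronglySorted_inv in HL as [HL HF]. rewrite Forall_forall in HF.
  apply SS_app.
  - apply HD; simpl; auto.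
  - apply IH; [exact HL| intros; apply HD; simpl; auto | intros k1 k2 y z H1 H2 H3 H4 H5; apply (HX k1 k2 y z); auto; right; auto].
  - intros y z Hy Hz. apply in_concat_map in Hz as [k' [Hk' Hz]].
    eapply HX with (k:=k) (k':=k'); simpl; eauto.
Qed.

Definition iv (i j : nat) : list nat := seq i (j - i).
Lemma in_iv i j y : In y (iv i j) <-> i <= y < j.
Proof. unfold iv. rewrite in_seq. lia. Qed.
Lemma SS_seq : forall n i, StronglySorted lt (seq i n).
Proof. induction n; intros; simpl; constructor; auto.
  apply Forall_forall; intros y Hy; apply in_seq in Hy; lia. Qed.
Lemma SS_iv i j : StronglySorted lt (iv i j).
Proof. apply SS_seq. Qed.
Lemma iv_nonempty i j : i < j -> iv i j <> [].
Proof. unfold iv; destruct (j - i) eqn:E; [lia|discriminate]. Qed.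
Lemma iv_split i j k : i < j -> j < k -> iv i k = iv i j ++ iv j k.
Proof. intros. unfold iv. replace (k - i) with ((j - i) + (k - j)) by lia. rewrite seq_app.
  f_equal. f_equal. lia. Qed.

Definition BS (D : nat -> list nat) : Prop :=
  (forall k, D k <> [] /\ StronglySorted lt (D k)) /\
  (forall k k' y z, k < k' -> In y (D k) -> In z (D k') -> y < z).

Definition comp (D E : nat -> list nat) : nat -> list nat := fun m => concat (map D (E m)).

Lemma BS_comp D E : BS D -> BS E -> BS (comp D E).
Proof.
  intros [HD1 HD2] [HE1 HE2]. split.
  - intro m. unfold comp. split.
    + apply concat_map_nonempty; [apply HE1|intros; apply HD1].
    + apply SS_concat; [apply HE1| intros; apply HD1 | intros; eapply HD2; eauto].
  - intros m m' y z Hm Hy Hz. unfold comp in *.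
    apply in_concat_map in Hy as [k [Hk Hy]]. apply in_concat_map in Hz as [k' [Hk' Hz]].
    eapply HD2; [eapply HE2; eauto| eauto | eauto].
Qed.

Lemma BS_sumseq {T} (op : T -> T -> T) (a : nat -> T) E : BS E -> sumsequence op a (fun m => sumL op a (E m)).
Proof.
  intros [H1 H2]. exists (fun k => (hd 0 (E k), tl (E k))). split; [|split].
  - intro k. unfold incr_list. simpl. destruct (H1 k) as [Hne HS]. destruct (E k); [congruence|exact HS].
  - intros k x y Hx Hy. simpl in *. apply (H2 k (S k)); [lia| |].
    + destruct (H1 k) as [Hne _]; destruct (E k); [congruence| exact Hx].
    + destruct (H1 (S k)) as [Hne _]; destruct (E (S k)); [congruence| exact Hy].
  - intro k. simpl. destruct (H1 k) as [Hne _]; destruct (E k); [congruence|reflexivity].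
Qed.

Definition Type2 {T} (op : T -> T -> T) (b : nat -> T) : Prop :=
  forall n, 1 <= n -> ~ (exists x y, in_FS op b n x /\ in_FS op b n y /\ x = op y (b n)).

Lemma fold_ext {T} (op : T -> T -> T) (b b' : nat -> T) n (Hb : forall k, k < n -> b k = b' k) :
  forall t acc, (forall j, In j t -> j < n) ->
  fold_left (fun acc j => op acc (b j)) t acc = fold_left (fun acc j => op acc (b' j)) t acc.
Proof. induction t as [|j t IH]; intros acc Ht; simpl; auto.
  rewrite Hb by (apply Ht; simpl; auto). apply IH. intros; apply Ht; simpl; auto. Qed.

Lemma in_FS_ext {T} (op : T -> T -> T) (b b' : nat -> T) n u :
  (forall k, k < n -> b k = b' k) -> in_FS op b n u -> in_FS op b' n u.
Proof. intros Hb [i [t [H1 [H2 H3]]]]. exists i, t. split; [auto|split; auto]. subst u.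
  unfold idx_sum. rewrite Hb by (apply H2; simpl; auto). apply fold_ext with n; auto.
  intros; apply H2; simpl; auto. Qed.

Fixpoint fsl {T} (op : T -> T -> T) (b : nat -> T) (n : nat) : list T :=
  match n with 0 => [] | S n' => fsl op b n' ++ b n' :: map (fun y => op y (b n')) (fsl op b n') end.

Lemma FS_in {T} (op : T -> T -> T) (assoc : forall x y z, op x (op y z) = op (op x y) z)
  (b : nat -> T) : forall n l, l <> [] -> StronglySorted lt l -> (forall j, In j l -> j < n) ->
  In (sumL op b l) (fsl op b n).
Proof.
  induction n as [|n IH]; intros l Hne HS Hlt.
  - destruct l as [|i t]; [congruence|]. specialize (Hlt i (or_introl eq_refl)). lia.
  - destruct (exists_last Hne) as [l' [z Hl]]. subst l.
    pose proof HS as HS0. apply SS_app_inv in HS0 as [HS1 [_ HX]].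
    assert (Hz : z < S n) by (apply Hlt; apply in_or_app; simpl; auto).
    simpl. apply in_or_app.
    destruct (Nat.eq_dec z n) as [->|Hzn].
    + right. destruct l' as [|i t].
      * simpl. left. reflexivity.
      * right. rewrite (sumL_snoc op assoc) by discriminate. apply (in_map (fun y => op y (b n))).
        apply IH; auto; [discriminate|]. intros j Hj. specialize (HX j n Hj (or_introl eq_refl)). lia.
    + left. apply IH; auto.
      intros j Hj. apply in_app_or in Hj as [Hj|[<-|[]]]; [|lia].
      specialize (HX j z Hj (or_introl eq_refl)). lia.
Qed.

Lemma FS_in' {T} (op : T -> T -> T) (assoc : forall x y z, op x (op y z) = op (op x y) z)
  (b : nat -> T) n u : in_FS op b n u -> In u (fsl op b n).
Proof. intros [i [t [H1 [H2 H3]]]]. subst u. change (idx_sum op b i t) with (sumL op b (i :: t)).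
  apply (FS_in op assoc); auto. discriminate. Qed.

Lemma pigeon {A} (L : list A) (Q : nat -> A -> Prop) M :
  (forall j, M <= j -> exists z, In z L /\ Q j z) ->
  exists z, In z L /\ forall m, exists j, m <= j /\ Q j z.
Proof.
  revert M. induction L as [|z0 L IH]; intros M H.
  - destruct (H M (le_n M)) as [z [[] _]].
  - destruct (classic (forall m, exists j, m <= j /\ Q j z0)) as [Hc|Hc].
    + exists z0; split; simpl; auto.
    + apply not_all_ex_not in Hc as [m0 Hm0].
      destruct (IH (max M m0)) as [z [Hz Hq]].
      * intros j Hj. destruct (H j) as [z [[<-|Hz] Hq]]; [lia| |eauto].
        exfalso. apply Hm0. exists j. split; [lia|exact Hq].
      * exists z; split; simpl; auto.
Qed.

Lemma absorb {T} (op : T -> T -> T) (assoc : forall x y z, op x (op y z) = op (op x y) z)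
  (y : nat -> T) c : (forall m, op c (y m) = c) -> forall L, L <> [] -> op c (sumL op y L) = c.
Proof. intros H L. induction L as [|k L IH]; intros HL; [congruence|]. destruct L as [|k' L'].
 - simpl. apply H.
 - rewrite (sumL_cons op assoc) by discriminate. rewrite assoc, H. apply IH. discriminate. Qed.

Definition Ref (D D' : nat -> list nat) :=
  exists f : nat -> list nat, forall m, f m <> [] /\ D' m = concat (map D (f m)).
Lemma concat_map_concat (D f : nat -> list nat) L :
  concat (map D (concat (map f L))) = concat (map (fun k => concat (map D (f k))) L).
Proof. induction L; simpl; auto. rewrite map_app, concat_app, IHL. reflexivity. Qed.
Lemma Ref_trans D1 D2 D3 : Ref D1 D2 -> Ref D2 D3 -> Ref D1 D3.
Proof. intros [f1 H1] [f2 H2]. exists (fun m => concat (map f1 (f2 m))). intro m. split.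
 - apply concat_map_nonempty; [apply H2| intros; apply H1].
 - rewrite (proj2 (H2 m)). rewrite concat_map_concat. f_equal. apply map_ext. intro k. apply H1.
Qed.
Lemma Ref_refl D : Ref D D.
Proof. exists (fun m => [m]). intro m. split; [discriminate|]. simpl. rewrite app_nil_r. reflexivity. Qed.

Definition Split {T} (op : T -> T -> T) (x : nat -> T) (G : list nat) (B : nat -> list nat) : Prop :=
  G <> [] /\ StronglySorted lt G /\ BS B /\
  (forall m y z, In y G -> In z (B m) -> y < z) /\
  (forall m, op (sumL op x G) (sumL op x (B m)) = sumL op x G).

Definition bq {T} (op : T -> T -> T) (x : nat -> T) (q : nat -> nat) (k : nat) : T :=
  sumL op x (iv (q k) (q (S k))).
Definition Good {T} (op : T -> T -> T) (x : nat -> T) (q : nat -> nat) n j : Prop :=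
  ~ (exists u v, in_FS op (bq op x q) n u /\ in_FS op (bq op x q) n v /\
      u = op v (sumL op x (iv (q n) j))).
Definition incr (q : nat -> nat) n := forall k, k < n -> q k < q (S k).

Lemma incr_mono q n : incr q n -> forall k k', k <= k' -> k' <= n -> q k <= q k'.
Proof. intros H k k' Hk. induction Hk; intros; [lia|].
  specialize (H m ltac:(lia)). specialize (IHHk ltac:(lia)). lia. Qed.

Lemma strict_mono (r : nat -> nat) : (forall m, r m < r (S m)) -> forall k k', k < k' -> r k < r k'.
Proof. intros H k k' Hk. induction Hk; [apply H|]. specialize (H m). lia. Qed.

Lemma exists_good {T} (op : T -> T -> T) (assoc : forall x y z, op x (op y z) = op (op x y) z)
  (x : nat -> T) : ~ (exists G B, Split op x G B) ->
  forall q n, incr q n -> exists j, q n < j /\ Good op x q n j.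
Proof.
  intros Hns q n Hinc. apply NNPP. intro Hno.
  set (L := fsl op (bq op x q) n).
  set (Qf := fun j (z : T * T) => in_FS op (bq op x q) n (snd z) /\
                                   fst z = op (snd z) (sumL op x (iv (q n) j))).
  assert (H : forall j, S (q n) <= j -> exists z, In z (list_prod L L) /\ Qf j z).
  { intros j Hj. assert (Hng : ~ Good op x q n j) by (intro; apply Hno; exists j; split; [lia|auto]).
    unfold Good in Hng. apply NNPP in Hng. destruct Hng as [u [v [Hu [Hv Huv]]]].
    exists (u, v). split.
    - apply in_prod; apply (FS_in' op assoc); auto.
    - split; simpl; auto. }
  destruct (pigeon _ _ _ H) as [[u v] [_ Hinf]].
  destruct (Hinf (S (q n))) as [j0 [Hj0 [Hv Hu]]]. simpl in Hv, Hu.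
  destruct Hv as [i [t [Hs [Hlt Hv]]]].
  set (Dq := fun k => iv (q k) (q (S k))).
  set (G := concat (map Dq (i :: t)) ++ iv (q n) j0).
  assert (Hnx : forall m, {j | m <= j /\ Qf j (u, v)}).
  { intro m. apply constructive_indefinite_description. apply Hinf. }
  set (r := nat_rect (fun _ => nat) j0 (fun _ rm => proj1_sig (Hnx (S rm)))).
  assert (HrS : forall m, r (S m) = proj1_sig (Hnx (S (r m)))) by reflexivity.
  assert (Hr0 : r 0 = j0) by reflexivity.
  assert (HrQ : forall m, Qf (r m) (u, v)).
  { intros [|m]; [rewrite Hr0; split; simpl; auto; exists i, t; auto|].
    rewrite HrS. apply (proj2_sig (Hnx (S (r m)))). }
  assert (Hrlt : forall m, r m < r (S m)).
  { intro m. rewrite HrS. pose proof (proj2_sig (Hnx (S (r m)))). simpl in H0. lia. }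
  assert (Hrge : forall m, j0 <= r m).
  { intro m. induction m; [lia|]. specialize (Hrlt m). lia. }
  assert (HDq : forall k, In k (i :: t) -> k < n /\ q k < q (S k)).
  { intros k Hk. assert (k < n) by (apply Hlt; auto). split; auto. }
  assert (HyG : forall y, In y (concat (map Dq (i :: t))) -> y < q n).
  { intros y Hy. apply in_concat_map in Hy as [k [Hk Hy]]. unfold Dq in Hy. apply in_iv in Hy.
    destruct (HDq k Hk) as [Hkn _]. pose proof (incr_mono q n Hinc (S k) n ltac:(lia) ltac:(lia)). lia. }
  assert (Hcne : concat (map Dq (i :: t)) <> []).
  { apply concat_map_nonempty; [discriminate|]. intros k Hk. apply iv_nonempty. apply HDq; auto. }
  apply Hns. exists G, (fun m => iv (r m) (r (S m))). unfold Split. split; [|split; [|split; [|split]]].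
  - unfold G. intro E. apply app_eq_nil in E as [_ E]. apply (iv_nonempty (q n) j0); [lia|auto].
  - unfold G. apply SS_app.
    + apply SS_concat; auto.
      * intros; apply SS_iv.
      * intros k k' y z Hk Hk' Hkk Hy Hz. unfold Dq in *. apply in_iv in Hy. apply in_iv in Hz.
        destruct (HDq k' Hk') as [Hk'n _].
        pose proof (incr_mono q n Hinc (S k) k' ltac:(lia) ltac:(lia)). lia.
    + apply SS_iv.
    + intros y z Hy Hz. apply HyG in Hy. apply in_iv in Hz. lia.
  - split.
    + intro k. split; [apply iv_nonempty; auto| apply SS_iv].
    + intros k k' y z Hk Hy Hz. apply in_iv in Hy. apply in_iv in Hz.
      assert (S k <= k') by lia.
      destruct (Nat.eq_dec (S k) k') as [<-|Hne]; [lia|].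
      pose proof (strict_mono r Hrlt (S k) k' ltac:(lia)). lia.
  - intros m y z Hy Hz. apply in_iv in Hz. specialize (Hrge m).
    unfold G in Hy. apply in_app_or in Hy as [Hy|Hy].
    + apply HyG in Hy. lia.
    + apply in_iv in Hy. lia.
  - intro m.
    assert (HG : sumL op x G = u).
    { unfold G. rewrite (sumL_app op assoc); auto; [|apply iv_nonempty; lia].
      rewrite (sumL_concat op assoc); [|discriminate|intros k Hk; apply iv_nonempty; apply HDq; auto].
      rewrite Hu, Hv. reflexivity. }
    rewrite HG.
    destruct (HrQ m) as [_ H1]. destruct (HrQ (S m)) as [_ H2]. cbn [fst snd] in H1, H2.
    specialize (Hrge m). specialize (Hrlt m).
    rewrite (iv_split (q n) (r m) (r (S m))) in H2 by lia.
    rewrite (sumL_app op assoc) in H2 by (apply iv_nonempty; lia).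
    rewrite assoc, <- H1 in H2. symmetry. exact H2.
Qed.

Lemma claim {T} (op : T -> T -> T) (assoc : forall x y z, op x (op y z) = op (op x y) z)
  (x : nat -> T) :
  (exists E, BS E /\ Type2 op (fun m => sumL op x (E m))) \/ (exists G B, Split op x G B).
Proof.
  destruct (classic (exists G B, Split op x G B)) as [Hs|Hns]; [right; exact Hs|left].
  assert (Hex : forall q n, exists j, q n < j /\ (incr q n -> Good op x q n j)).
  { intros q n. destruct (classic (incr q n)) as [Hi|Hi].
    - destruct (exists_good op assoc x Hns q n Hi) as [j [H1 H2]]. exists j; auto.
    - exists (S (q n)). split; [lia| tauto]. }
  assert (Hch : forall q n, {j | q n < j /\ (incr q n -> Good op x q n j)}).
  { intros. apply constructive_indefinite_description. apply Hex. }
  set (ch := fun q n => proj1_sig (Hch q n)).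
  set (P := nat_rect (fun _ => nat -> nat) (fun _ => 0)
              (fun n Pn k => if k <=? n then Pn k else ch Pn n)).
  set (p := fun k => P k k).
  assert (HPS : forall n k, P (S n) k = if k <=? n then P n k else ch (P n) n) by reflexivity.
  assert (Hagree : forall n k, k <= n -> P n k = p k).
  { induction n as [|n IH]; intros k Hk.
    - assert (k = 0) by lia. subst. reflexivity.
    - destruct (Nat.eq_dec k (S n)) as [->|Hne]; [reflexivity|].
      rewrite HPS. replace (k <=? n) with true by (symmetry; apply Nat.leb_le; lia).
      apply IH; lia. }
  assert (HpS : forall n, p (S n) = ch (P n) n).
  { intro n. unfold p at 1. rewrite HPS. replace (S n <=? n) with false by (symmetry; apply Nat.leb_gt; lia).
    reflexivity. }
  assert (Hlt : forall n, p n < p (S n)).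
  { intro n. rewrite HpS. exact (proj1 (proj2_sig (Hch (P n) n))). }
  assert (Hincr : forall n, incr (P n) n).
  { intros n k Hk. rewrite !Hagree by lia. apply Hlt. }
  assert (Hgood : forall n, Good op x (P n) n (p (S n))).
  { intro n. rewrite HpS. exact (proj2 (proj2_sig (Hch (P n) n)) (Hincr n)). }
  exists (fun m => iv (p m) (p (S m))). split.
  - split.
    + intro k. split; [apply iv_nonempty; auto| apply SS_iv].
    + intros k k' y z Hk Hy Hz. apply in_iv in Hy. apply in_iv in Hz.
      destruct (Nat.eq_dec (S k) k') as [<-|Hne]; [lia|].
      pose proof (strict_mono p Hlt (S k) k' ltac:(lia)). lia.
  - intros n Hn [u [v [Hu [Hv Huv]]]]. apply (Hgood n). exists u, v.
    assert (Hext : forall k, k < n -> sumL op x (iv (p k) (p (S k))) = bq op x (P n) k).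
    { intros k Hk. unfold bq. rewrite !Hagree by lia. reflexivity. }
    split; [|split].
    + exact (in_FS_ext op _ _ n u Hext Hu).
    + exact (in_FS_ext op _ _ n v Hext Hv).
    + exact Huv.
Qed.

Lemma main_gen {T} (op : T -> T -> T) (assoc : forall x y z, op x (op y z) = op (op x y) z)
  (a : nat -> T) :
  exists b, sumsequence op a b /\ ((forall n m, n < m -> op (b n) (b m) = b n) \/ Type2 op b).
Proof.
  destruct (classic (exists E, BS E /\ Type2 op (fun m => sumL op a (E m)))) as [[E [HE H2]]|Hno].
  { exists (fun m => sumL op a (E m)). split; [apply BS_sumseq; auto | right; auto]. }
  assert (Hstep : forall D, exists pr : list nat * (nat -> list nat),
             BS D -> Split op (fun k => sumL op a (D k)) (fst pr) (snd pr)).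
  { intro D. destruct (classic (BS D)) as [HD|HD]; [|exists ([], fun _ => []); tauto].
    destruct (claim op assoc (fun k => sumL op a (D k))) as [[E [HE H2]]|[G [B HS]]].
    - exfalso. apply Hno. exists (comp D E). split; [apply BS_comp; auto|].
      replace (fun m => sumL op a (comp D E m))
        with (fun m => sumL op (fun k => sumL op a (D k)) (E m)); auto.
      apply functional_extensionality. intro m. unfold comp. symmetry.
      apply (sumL_concat op assoc); [apply HE | intros; apply HD].
    - exists (G, B); auto. }
  assert (Hst : forall D, {pr : list nat * (nat -> list nat) |
             BS D -> Split op (fun k => sumL op a (D k)) (fst pr) (snd pr)}).
  { intro D. apply constructive_indefinite_description. apply Hstep. }
  set (st := fun D => proj1_sig (Hst D)).
  set (lev := nat_rect (fun _ => nat -> list nat) (fun m => [m]) (fun _ D => comp D (snd (st D)))).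
  assert (HlevS : forall n, lev (S n) = comp (lev n) (snd (st (lev n)))) by reflexivity.
  assert (HBS : forall n, BS (lev n)).
  { induction n as [|n IH].
    - split.
      + intro k. split; [discriminate|]. constructor; constructor.
      + intros k k' y z Hk [<-|[]] [<-|[]]. exact Hk.
    - rewrite HlevS. apply BS_comp; auto.
      destruct (proj2_sig (Hst (lev n)) IH) as [_ [_ [HB _]]]. exact HB. }
  assert (Hsp : forall n, Split op (fun k => sumL op a (lev n k)) (fst (st (lev n))) (snd (st (lev n)))).
  { intro n. exact (proj2_sig (Hst (lev n)) (HBS n)). }
  assert (HrefS : forall n, Ref (lev n) (lev (S n))).
  { intro n. exists (snd (st (lev n))). intro m. split.
    - destruct (Hsp n) as [_ [_ [[HB _] _]]]. apply HB.
    - rewrite HlevS. reflexivity. }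
  assert (HrefLe : forall n k, Ref (lev n) (lev (n + k))).
  { intros n k. induction k as [|k IH].
    - rewrite Nat.add_0_r. apply Ref_refl.
    - rewrite Nat.add_succ_r. eapply Ref_trans; [exact IH| apply HrefS]. }
  set (C := fun n => concat (map (lev n) (fst (st (lev n))))).
  assert (Hkey : forall n n', n < n' -> exists L, L <> [] /\ C n' = concat (map (lev (S n)) L)).
  { intros n n' Hnn. destruct (HrefLe (S n) (n' - S n)) as [f Hf].
    replace (S n + (n' - S n)) with n' in Hf by lia.
    exists (concat (map f (fst (st (lev n'))))). split.
    - apply concat_map_nonempty; [apply (Hsp n')| intros; apply Hf].
    - unfold C. rewrite concat_map_concat. f_equal. apply map_ext. intro k. apply Hf. }
  exists (fun n => sumL op a (C n)). split.
  - apply BS_sumseq. split.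
    + intro n. destruct (Hsp n) as [HG [HSG _]]. destruct (HBS n) as [HB1 HB2]. unfold C. split.
      * apply concat_map_nonempty; auto. intros; apply HB1.
      * apply SS_concat; auto. intros; apply HB1. intros; eapply HB2; eauto.
    + intros n n' y z Hnn Hy Hz.
      destruct (Hkey n n' Hnn) as [L [_ HL]]. rewrite HL in Hz.
      apply in_concat_map in Hz as [m [_ Hz]]. rewrite HlevS in Hz. unfold comp in Hz.
      apply in_concat_map in Hz as [k' [Hk' Hz]].
      unfold C in Hy. apply in_concat_map in Hy as [k [Hk Hy]].
      destruct (Hsp n) as [_ [_ [_ [HX _]]]].
      destruct (HBS n) as [_ HB2]. eapply HB2; [eapply HX; eauto| eauto| eauto].
  - left. intros n n' Hnn.
    destruct (Hkey n n' Hnn) as [L [HLne HL]]. rewrite HL.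
    destruct (HBS (S n)) as [HB1 _].
    rewrite (sumL_concat op assoc); [|exact HLne| intros; apply HB1].
    apply (absorb op assoc).
    2: exact HLne.
    intro m. rewrite HlevS. unfold comp.
    destruct (Hsp n) as [HGne [_ [[HBB _] [_ Habs]]]].
    destruct (HBS n) as [HD1 _].
    rewrite (sumL_concat op assoc); [| apply HBB | intros; apply HD1].
    unfold C. rewrite (sumL_concat op assoc); [| exact HGne | intros; apply HD1].
    apply Habs.
Qed.

Theorem lemma5p1 (S : Type) (op : S -> S -> S)
  (op_assoc : forall x y z, op x (op y z) = op (op x y) z)
  (a : nat -> S) :
  exists b : nat -> S, sumsequence op a b /\
    ((forall n m, n < m -> op (b n) (b m) = b n) \/
     (forall n, 1 <= n ->
        ~ (exists x y, in_FS op b n x /\ in_FS op b n y /\ x = op y (b n)))).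
Proof.
  destruct (main_gen op op_assoc a) as [b [H1 H2]]. exists b. split; [exact H1|].
  destruct H2 as [H2|H2]; [left; exact H2| right; exact H2].
Qed.
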